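(* There is an absolute constant $C>0$ such that the following holds. Let $(a_n)_{n\ge1}$ be real with $|a_n|\le1$ and $\gamma_n=\operatorname{sign}(a_n)$. Let $\ell\in\{0,1,2,3\}$, $k\ge1$, $q=q^{(\ell)}_k$, let $M$ be an integer with $1\le M\le L^{(\ell)}_k$, and let $r,c$ be integers in $[0,q]$. Let $x\in P^{(\ell)}\times\{-1,0,1\}^{\mathbb Z}$ satisfy, for every integer $n$ with $q\le n<q^{(\ell)}_{k+1}$, $$\Pi_1x(n)=(\sigma^{-r}s^{(\ell)}_k)(n),\qquad \Pi_2x(n)=\gamma(qn+c).$$ Then $$\Big|\frac1{qM}\sum_{n=1}^{qM}g(T^nx)a(n)-A^{q,M}_{r,c}\Big|\le C\frac{q}{M}.$$
   Context: Let $\tau:\mathbb N\to(0,\infty)$ be non-increasing with $\tau(n)\to0$. Fix integers $2\le q_1<q_2<\cdots$ such that for every $k\ge1$: (i) $q_{k+1}>q_k^4+3q_k$; (ii) $\tau(\lceil q_{k+1}/3\rceil)<\frac1{16q_k}$. For $k\ge1$ put $q^{(0)}_k=q_{2k}$, $q^{(1)}_k=q_{2k+1}$, $q^{(2)}_k=q^{(0)}_k-1$, $q^{(3)}_k=q^{(1)}_k-1$, and $L^{(i)}_k=\lfloor q^{(i)}_{k+1}/(3q^{(i)}_k)\rfloor$. Let $s^{(i)}_k\in\{-1,0,1\}^{\mathbb N}$ (indices $n\ge1$) be given by $s^{(i)}_k(n)=1$ if $n=jq^{(i)}_k$ with $1\le j\le L^{(i)}_k$, $s^{(i)}_k(n)=-1$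 if $n=jq^{(i)}_k$ with $L^{(i)}_k<j\le2L^{(i)}_k$, and $s^{(i)}_k(n)=0$ otherwise. For $w\in\{-1,0,1\}^{\mathbb N}$ and $p\in\mathbb N_0$ let $\sigma^{-p}w$ be defined by $(\sigma^{-p}w)(n)=0$ for $1\le n\le p$ and $(\sigma^{-p}w)(n)=w(n-p)$ for $n>p$. For $l\le m$ write $w|_l^m=(w_l,\dots,w_m)$. Let $R^{(i)}_k=\{(\sigma^{-p}s^{(i)}_k)|_{q^{(i)}_k}^{q^{(i)}_{k+1}-1}:p=0,1,\dots,q^{(i)}_k\}$ and $P^{(i)}=\{y\in\{-1,0,1\}^{\mathbb N}: y(n)=0\text{ for }1\le n<q^{(i)}_1,\ y|_{q^{(i)}_k}^{q^{(i)}_{k+1}-1}\in R^{(i)}_k\text{ for all }k\ge1\}$. Let $Z=\{-1,0,1\}^{\mathbb N}\times\{-1,0,1\}^{\mathbb Z}$, with coordinate projections $\Pi_1,\Pi_2$; $\sigma$ is the left shift $(\sigma u)_m=u_{m+1}$ (invertible on $\{-1,0,1\}^{\mathbb Z}$); $T:Z\to Z$, $T(y,z)=(\sigma y,\sigma^{y_1}z)$; $g:Z\to\{-1,0,1\}$, $g(y,z)=z_0$. For integers $q,M\ge1$ and $r,c\in[0,q]$ set $$A^{q,M}_{r,c}=\frac1{qM}\sum_{b=r}^{q-1+r}\sum_{n=1}^M\gamma(qn+c)\,a(qn+b).$$ *)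

(* Defs.v *)
From HB Require Import structures.
From mathcomp Require Import all_boot all_order all_algebra.
From mathcomp Require Import all_classical all_reals all_analysis.
Set Implicit Arguments. Unset Strict Implicit. Unset Printing Implicit Defensive.
Import Order.TTheory GRing.Theory Num.Theory.
Import numFieldNormedType.Exports.
Local Open Scope ring_scope.

(* Sequences in {-1,0,1}^N are functions nat -> int; only indices n >= 1 are
   meaningful (index 0 is ignored).  Sequences in {-1,0,1}^Z are int -> int. *)

Definition qseq (q : nat -> nat) (l k : nat) : nat :=
  match l with
  | 0 => q (2 * k)%N
  | 1 => q (2 * k + 1)%N
  | 2 => (q (2 * k) - 1)%N
  | _ => (q (2 * k + 1) - 1)%N
  end.

Definition Lseq (q : nat -> nat) (l k : nat) : nat :=
  (qseq q l k.+1 %/ (3 * qseq q l k))%N.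

Definition sseq (q : nat -> nat) (l k : nat) (n : nat) : int :=
  let qq := qseq q l k in
  let L := Lseq q l k in
  if (0 < n)%N && (qq %| n)%N then
    let j := (n %/ qq)%N in
    if (1 <= j <= L)%N then 1
    else if (L < j <= 2 * L)%N then -1 else 0
  else 0.

Definition shiftR (p : nat) (w : nat -> int) (n : nat) : int :=
  if (n <= p)%N then 0 else w (n - p)%N.

Definition inR (q : nat -> nat) (l k : nat) (y : nat -> int) : Prop :=
  exists p : nat, (p <= qseq q l k)%N /\
    forall n : nat, (qseq q l k <= n < qseq q l k.+1)%N ->
      y n = shiftR p (sseq q l k) n.

Definition trit (v : int) : bool := [|| v == -1, v == 0 | v == 1].

Definition inP (q : nat -> nat) (l : nat) (y : nat -> int) : Prop :=
  (forall n : nat, (1 <= n)%N -> trit (y n)) /\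
  (forall n : nat, (1 <= n < qseq q l 1)%N -> y n = 0) /\
  (forall k : nat, (1 <= k)%N -> inR q l k y).

Definition Tmap (x : (nat -> int) * (int -> int)) : (nat -> int) * (int -> int) :=
  (fun m => x.1 m.+1, fun j => x.2 (j + x.1 1%N)).

Definition gfun (x : (nat -> int) * (int -> int)) : int := x.2 0.

Definition gam (R : realType) (a : nat -> R) (n : nat) : int := sgz (a n).

Definition Aqm (R : realType) (a : nat -> R) (q M r c : nat) : R :=
  ((q * M)%:R)^-1 *
  \sum_(r <= b < q + r) \sum_(1 <= n < M.+1)
     (gam a (q * n + c))%:~R * a (q * n + b)%N.

(* Main.v *)
Require Import Defs.
From HB Require Import structures.
From mathcomp Require Import all_boot all_order all_algebra.
From mathcomp Require Import all_classical all_reals all_analysis.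
From mathcomp Require Import zify ring lra.
Import Order.TTheory GRing.Theory Num.Theory.
Import numFieldNormedType.Exports.
Local Open Scope ring_scope.

Definition gL (L t : nat) : int := (minn t L)%:Z - (minn t (2 * L) - L)%N%:Z.

Lemma Ps_formula (q : nat -> nat) (l k p : nat) :
  (0 < qseq q l k)%N -> forall n : nat,
  \sum_(1 <= m < n.+1) shiftR p (sseq q l k) m
  = gL (Lseq q l k) ((n - p) %/ qseq q l k).
Proof.
move=> q0; elim=> [|n IH].
  by rewrite big_geq // sub0n div0n /gL; lia.
rewrite big_nat_recr //= IH /shiftR.
case: (leqP n.+1 p) => hp.
  have -> : (n.+1 - p = n - p)%N by lia.
  by rewrite addr0.
have -> : (n.+1 - p = (n - p).+1)%N by lia.
rewrite /sseq /= !divnS //.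
set t := ((n - p) %/ qseq q l k)%N.
case: (qseq q l k %| (n - p).+1)%N => /=; last by rewrite add0n addr0.
rewrite /gL add1n.
set L := Lseq q l k.
case: ifP => h1; first lia.
case: ifP => h2; lia.
Qed.

Lemma gL0 L : gL L 0 = 0.
Proof. rewrite /gL; lia. Qed.

Lemma Ps0 (q : nat -> nat) (l k p : nat) :
  (0 < qseq q l k)%N -> (p <= qseq q l k)%N ->
  \sum_(1 <= m < qseq q l k) shiftR p (sseq q l k) m = 0.
Proof.
move=> q0 hp.
have -> : qseq q l k = (qseq q l k).-1.+1 by rewrite prednK.
rewrite Ps_formula ?prednK // divn_small ?gL0 //; lia.
Qed.

Lemma level0 (q : nat -> nat) (l k p : nat) :
  (0 < qseq q l k)%N -> (p <= qseq q l k)%N ->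
  (3 * qseq q l k + 3 <= qseq q l k.+1)%N ->
  \sum_(qseq q l k <= m < qseq q l k.+1) shiftR p (sseq q l k) m = 0.
Proof.
move=> q0 hp hg.
have h1 := Ps0 _ _ _ _ q0 hp.
have h2 : \sum_(1 <= m < qseq q l k.+1) shiftR p (sseq q l k) m = 0.
  have -> : qseq q l k.+1 = (qseq q l k.+1).-1.+1 by lia.
  rewrite Ps_formula //.
  set L := Lseq q l k.
  have hL : (L * (3 * qseq q l k) <= qseq q l k.+1)%N by exact: leq_trunc_div.
  have : (2 * L <= ((qseq q l k.+1).-1 - p) %/ qseq q l k)%N.
    rewrite leq_divRL //. set X := (L * qseq q l k)%N in hL *.
    have -> : (2 * L * qseq q l k = 2 * X)%N by rewrite /X mulnA.
    have : (L * (3 * qseq q l k) = 3 * X)%N by rewrite /X mulnCA.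
    lia.
  rewrite /gL; lia.
move: h2; rewrite (@big_cat_nat _ _ _ (qseq q l k)) //=; [|lia].
by rewrite h1 add0r.
Qed.

Lemma qge2 (q : nat -> nat) :
  (2 <= q 1)%N -> (forall k, (1 <= k)%N -> (q k < q k.+1)%N) ->
  forall j, (1 <= j)%N -> (2 <= q j)%N.
Proof.
move=> h1 hi; elim=> // [[|j]] IH _ //.
have := hi j.+1 erefl; have := IH erefl; lia.
Qed.

Lemma growth (q : nat -> nat) (l k : nat) :
  (2 <= q 1)%N -> (forall k, (1 <= k)%N -> (q k < q k.+1)%N) ->
  (forall k, (1 <= k)%N -> (q k ^ 4 + 3 * q k < q k.+1)%N) ->
  (l < 4)%N -> (1 <= k)%N ->
  (0 < qseq q l k)%N /\ (3 * qseq q l k + 3 <= qseq q l k.+1)%N.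
Proof.
move=> h1 hi h4 hl hk.
have g := qge2 _ h1 hi.
have e1 : (2 * k.+1 = (2 * k).+2)%N by lia.
have e2 : (2 * k.+1 + 1 = (2 * k).+3)%N by lia.
have p4 : forall j, (1 <= j)%N -> (3 * q j + 3 <= q j.+2)%N.
  move=> j hj; have := h4 j hj; have := hi j.+1 erefl.
  have : (2 <= q j ^ 4)%N.
    apply: (leq_trans (g j hj)); rewrite -{1}(expn1 (q j)) leq_pexp2l //; have := g j hj; lia.
  lia.
have A := p4 (2 * k)%N ltac:(lia).
have B := p4 (2 * k + 1)%N ltac:(lia).
have C0 := g (2 * k)%N ltac:(lia).
have C1 := g (2 * k + 1)%N ltac:(lia).
have e3 : ((2 * k + 1).+2 = (2 * k).+3)%N by lia.
rewrite e3 in B.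
case: l hl => [|[|[|[|l]]]] // _; rewrite /qseq ?e2 ?e1. all: lia.
Qed.

Lemma Ylow (q : nat -> nat) (l : nat) (y : nat -> int) :
  (forall k, (1 <= k)%N -> (0 < qseq q l k)%N /\ (3 * qseq q l k + 3 <= qseq q l k.+1)%N) ->
  inP q l y -> forall k, (1 <= k)%N -> \sum_(1 <= m < qseq q l k) y m = 0.
Proof.
move=> hg [_ [hy0 hR]]; elim=> // [[|k]] IH _.
  by rewrite big_nat big1 // => m /hy0.
have [g0 g3] := hg k.+1 erefl.
rewrite (@big_cat_nat _ _ _ (qseq q l k.+1)) //=; last lia.
rewrite IH // add0r.
have [p [hp hyp]] := hR k.+1 erefl.
rewrite (eq_big_nat _ _ (F2 := shiftR p (sseq q l k.+1))); last by move=> m /hyp.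
exact: level0.
Qed.

Lemma Ylevel (q : nat -> nat) (l k r : nat) (y : nat -> int) :
  (forall k, (1 <= k)%N -> (0 < qseq q l k)%N /\ (3 * qseq q l k + 3 <= qseq q l k.+1)%N) ->
  inP q l y -> (1 <= k)%N -> (r <= qseq q l k)%N ->
  (forall n : nat, (qseq q l k <= n < qseq q l k.+1)%N -> y n = shiftR r (sseq q l k) n) ->
  forall n, (qseq q l k <= n.+1 <= qseq q l k.+1)%N ->
  \sum_(1 <= m < n.+1) y m = gL (Lseq q l k) ((n - r) %/ qseq q l k).
Proof.
move=> hg hP hk hr hy n hn.
have [g0 g3] := hg k hk.
rewrite -Ps_formula //.
rewrite (@big_cat_nat _ _ _ (qseq q l k)) //=; last lia.
rewrite [in RHS](@big_cat_nat _ _ _ (qseq q l k)) //=; last lia.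
rewrite Ylow // Ps0 // !add0r.
apply: eq_big_nat => m hm; apply: hy; lia.
Qed.

Lemma iterT (y : nat -> int) (z : int -> int) n :
  (forall m, (iter n Tmap (y, z)).1 m = y (m + n)%N) /\
  (forall j, (iter n Tmap (y, z)).2 j = z (j + \sum_(1 <= m < n.+1) y m)).
Proof.
elim: n => [|n [IH1 IH2]].
  by split=> [m|j] /=; rewrite ?addn0 // big_geq // addr0.
split=> [m|j] /=; first by rewrite IH1 addSnnS.
rewrite IH2 IH1 [in RHS]big_nat_recr //= add1n.
by rewrite addrAC -addrA.
Qed.

Lemma sum_ind (R : realType) (G : nat -> R) a b T :
  (a <= b <= T)%N ->
  \sum_(a <= n < b) G n = \sum_(0 <= n < T) (if (a <= n < b)%N then G n else 0).
Proof.
move=> /andP[hab hbT].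
rewrite (@big_cat_nat _ _ _ a 0 T) //=; last lia.
rewrite (@big_cat_nat _ _ _ b a T) //=.
rewrite [X in _ = X + _](eq_big_nat _ _ (F2 := fun=> 0)); last by move=> i hi; case: ifP => //; lia.
rewrite [X in _ = _ + (_ + X)](eq_big_nat _ _ (F2 := fun=> 0)); last by move=> i hi; case: ifP => //; lia.
rewrite !big1_eq add0r addr0.
by apply: eq_big_nat => i ->.
Qed.

Lemma cnt_lt (R : realType) T K :
  \sum_(0 <= n < T) (((n < K)%N : nat)%:R : R) = (minn T K)%:R.
Proof.
elim: T => [|T IH]; first by rewrite big_geq // min0n.
rewrite big_nat_recr //= IH -natrD; congr (_%:R).
case: (ltnP T K) => h /=; lia.
Qed.

Lemma cnt_gt (R : realType) T b :
  \sum_(0 <= n < T) (((b < n)%N : nat)%:R : R) = (T - b.+1)%N%:R.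
Proof.
elim: T => [|T IH]; first by rewrite big_geq // sub0n.
rewrite big_nat_recr //= IH -natrD; congr (_%:R).
case: (ltnP b T) => h /=; lia.
Qed.

Definition hfun (R : realType) (a : nat -> R) Q r c (n : nat) : R :=
  (gam a (Q * ((n - r) %/ Q) + c))%:~R * a n.
Arguments hfun {R}.

Lemma Aqm_single (R : realType) (a : nat -> R) Q M r c :
  (0 < Q)%N -> (r <= Q)%N ->
  \sum_(r <= b < Q + r) \sum_(1 <= n < M.+1) (gam a (Q * n + c))%:~R * a (Q * n + b)%N
  = \sum_(Q + r <= n < Q * M + Q + r) hfun a Q r c n.
Proof.
move=> Q0 hr.
rewrite exchange_big_nat /=.
have inner : forall m, \sum_(r <= b < Q + r) (gam a (Q * m + c))%:~R * a (Q * m + b)%N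
   = \sum_(Q * m + r <= n < Q * m + Q + r) hfun a Q r c n.
  move=> m; rewrite (addnC (Q * m) r) big_addn.
  have -> : (Q * m + Q + r - Q * m = Q + r)%N by lia.
  apply: eq_big_nat => b hb; rewrite /hfun (addnC b).
  have -> : (Q * m + b - r = m * Q + (b - r))%N by lia.
  rewrite divnMDl // divn_small ?addn0 //; last lia.
elim: M => [|M IH]; first by rewrite big_geq // big_geq //; lia.
rewrite big_nat_recr //= IH inner.
have -> : (Q * M.+1 + r = Q * M + Q + r)%N by rewrite mulnS; lia.
by rewrite -big_cat_nat //; lia.
Qed.

Lemma trit_norm (R : realType) (v : int) : trit v -> `|(v%:~R : R)| <= 1.
Proof. by case/or3P => /eqP ->; rewrite ?mulrN1z ?normrN ?normr1 ?normr0. Qed.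

Lemma trit_sgz (R : realType) (x : R) : trit (sgz x).
Proof. by rewrite /trit; case: sgzP. Qed.

Lemma term_le1 (R : realType) (a : nat -> R) (v : int) n :
  (forall n, (1 <= n)%N -> `|a n| <= 1) -> (1 <= n)%N -> trit v ->
  `|v%:~R * a n| <= 1.
Proof.
move=> ha hn hv; rewrite normrM; apply: mulr_ile1 => //.
  exact: (trit_norm R v hv).
exact: ha.
Qed.

Local Open Scope classical_set_scope.
Local Open Scope ring_scope.
Theorem mainTheorem7 (R : realType) :
  exists C : R, 0 < C /\
  forall (tau : nat -> R) (q : nat -> nat),
    (forall n, (1 <= n)%N -> 0 < tau n) ->
    (forall m n, (1 <= m <= n)%N -> tau n <= tau m) ->
    tau @ \oo --> (0 : R) ->
    (2 <= q 1)%N ->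
    (forall k, (1 <= k)%N -> (q k < q k.+1)%N) ->
    (forall k, (1 <= k)%N -> (q k ^ 4 + 3 * q k < q k.+1)%N) ->
    (forall k, (1 <= k)%N ->
       tau ((q k.+1 + 2) %/ 3)%N < ((16 * q k)%:R)^-1) ->
  forall (a : nat -> R),
    (forall n, (1 <= n)%N -> `|a n| <= 1) ->
  forall (l k M r c : nat),
    (l < 4)%N -> (1 <= k)%N ->
    (1 <= M <= Lseq q l k)%N ->
    (r <= qseq q l k)%N -> (c <= qseq q l k)%N ->
  forall (y : nat -> int) (z : int -> int),
    inP q l y -> (forall j, trit (z j)) ->
    (forall n : nat, (qseq q l k <= n < qseq q l k.+1)%N ->
       y n = shiftR r (sseq q l k) n /\
       z n%:Z = gam a (qseq q l k * n + c)%N) ->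
    `| ((qseq q l k * M)%:R)^-1 *
         \sum_(1 <= n < (qseq q l k * M).+1)
            (gfun (iter n Tmap (y, z)))%:~R * a n
       - Aqm a (qseq q l k) M r c |
    <= C * (qseq q l k)%:R / M%:R.
Proof.
exists 10; split => //.
move=> tau q _ _ _ h1 hi h4 _ a ha l k M r c hl hk /andP[hM1 hML] hr hc y z hP hz hyz.
have hg := fun k hk => growth q l k h1 hi h4 hl hk.
have [Q0 Q3] := hg k hk.
have hLQ : (Lseq q l k * (3 * qseq q l k) <= qseq q l k.+1)%N by exact: leq_trunc_div.
have hyl := Ylevel q l k r y hg hP hk hr (fun n hn => (hyz n hn).1).
set Q := qseq q l k in Q0 Q3 hLQ hyl hyz hr hc *.
set Q' := qseq q l k.+1 in Q3 hLQ hyl hyz *.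
set L := Lseq q l k in hLQ hyl hML *.
set N := (Q * M)%N.
have hNQ : (N < Q')%N.
  have : (Q * M <= L * Q)%N by rewrite mulnC leq_mul2r hML orbT.
  have : (L * (3 * Q) = 3 * (L * Q))%N by rewrite mulnCA.
  rewrite /N; lia.
set F := fun n => (gfun (iter n Tmap (y, z)))%:~R * a n.
set K := (Q * Q + Q + r)%N.
set T := (Q * M + Q + r)%N.
have key : forall n, (K <= n <= N)%N -> F n = hfun a Q r c n.
  move=> n /andP[hKn hnN].
  rewrite /F /hfun /gfun (iterT y z n).2 add0r.
  have hm1 : ((n - r) %/ Q <= M)%N.
    rewrite -(mulKn M Q0); apply: leq_div2r; rewrite /N in hnN; lia.
  have hm2 : (Q <= (n - r) %/ Q)%N by rewrite leq_divRL //; rewrite /K in hKn; lia.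
  have hm3 : ((n - r) %/ Q < Q')%N.
    apply: (leq_ltn_trans (leq_div _ _)); lia.
  rewrite hyl; last lia.
  have -> : gL L ((n - r) %/ Q) = ((n - r) %/ Q)%N%:Z by rewrite /gL; lia.
  by rewrite (hyz _ _).2 //; apply/andP; split.
rewrite /Aqm Aqm_single //.
rewrite -mulrBr normrM ger0_norm ?invr_ge0 ?ler0n //.
rewrite (sum_ind R F 1%N N.+1 T); last by rewrite /T /N; lia.
rewrite (sum_ind R (hfun a Q r c) (Q + r)%N T T); last by rewrite /T; lia.
rewrite -sumrB.
have hb : `|\sum_(0 <= n < T) ((if (1 <= n < N.+1)%N then F n else 0) -
             (if (Q + r <= n < T)%N then hfun a Q r c n else 0))|
          <= (10 * Q * Q)%N%:R.
  apply: (le_trans (ler_norm_sum _ _ _)).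
  apply: (@le_trans _ _ (\sum_(0 <= n < T) (2 * (((n < K)%N : nat)%:R : R) + 2 * ((N < n)%N : nat)%:R))).
    rewrite !big_nat; apply: ler_sum => n /andP[_ hnT].
    have hF : forall n, (1 <= n)%N -> `|F n| <= 1.
      by move=> m hm; apply: term_le1 => //; rewrite /gfun (iterT y z m).2; apply: hz.
    have hH : forall n, (1 <= n)%N -> `|hfun a Q r c n| <= 1.
      by move=> m hm; apply: term_le1 => //; apply: trit_sgz.
    case: (ltnP n K) => hnK.
      rewrite /= mulr1; apply: (le_trans (ler_normB _ _)).
      apply: (@le_trans _ _ (1 + 1)); last first.
        by rewrite -[X in X <= _]addr0 lerD2l mulr_ge0 ?ler0n.
      apply: lerD.
        case: ifP => h; [apply: hF; lia | by rewrite normr0].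
      case: ifP => h; [apply: hH; lia | by rewrite normr0].
    case: (leqP n N) => hnN.
      rewrite !ifT; [|lia|lia].
      rewrite key ?subrr ?normr0 /=; [|lia].
      by apply: addr_ge0; apply: mulr_ge0; rewrite ?ler0n.
    rewrite ifF; last lia.
    rewrite /= add0r normrN.
    rewrite mulr0 add0r mulr1.
    apply: (@le_trans _ _ 1); last by rewrite ler1n.
    case: ifP => h; [apply: hH; lia | by rewrite normr0].
  rewrite big_split /= -!mulr_sumr cnt_lt cnt_gt.
  rewrite -!natrM -natrD ler_nat.
  have : (Q <= Q * Q)%N by rewrite leq_pmulr.
  rewrite /T /K; lia.
apply: (le_trans (ler_wpM2l _ hb)); first by rewrite invr_ge0 ler0n.
rewrite /N !natrM.
have QR : (Q%:R : R) != 0 by rewrite pnatr_eq0 -lt0n.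
have MR : (M%:R : R) != 0 by rewrite pnatr_eq0 -lt0n.
rewrite le_eqVlt; apply/orP; left; apply/eqP.
field; by rewrite MR QR.
Qed.
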